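(* For all non-negative integers $i,j$ with $k:=i+j\ge 1$ and all positive integers $\ell,n$, there exists a bipartite graph $G$ with pathwidth at most $k+1$ such that for every graph $H$ and every path $P$, if $G$ is isomorphic to a subgraph of $H\boxtimes P\boxtimes K_\ell$, then $P_n+K_{i,j}$ is a $2$-small minor of $H$.
   Context: Graphs are finite and simple. $P_n$ is the path on $n$ vertices, $K_\ell$ the complete graph on $\ell$ vertices, and $K_{i,j}$ the complete bipartite graph with parts of sizes $i$ and $j$ (so $K_{1,0}$ is a single vertex). The complete join $G+H$ is the disjoint union of $G$ and $H$ with all edges between them added. A model of $F$ in $H$ is a map $\mu$ assigning to each $v\in V(F)$ a connected subgraph $\mu(v)$ of $H$, with the $\mu(v)$ pairwise vertex-disjoint, and with $\mu(v),\mu(w)$ joined by an edge of $H$ whenever $vw\in E(F)$; $F$ is an $s$-small minor of $H$ if there is such a model with $|V(\mu(v))|\le s$ for all $v$. The strong product $G\boxtimes H$ has vertex set $V(G)\times V(H)$ with $(v,w)\sim(v',w')$ if ($v=v'$ and $ww'\in E(H)$) or ($w=w'$ and $vv'\in E(G)$) or ($vv'\in E(G)$ and $ww'\in E(H)$). *)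

(* Defs.v *)
From mathcomp Require Import all_boot.
Set Implicit Arguments. Unset Strict Implicit. Unset Printing Implicit Defensive.

Record sgraph := SGraph {
  vertex : finType;
  adj : rel vertex;
  adj_sym : symmetric adj;
  adj_irr : irreflexive adj }.

Definition path_adj n : rel 'I_n := fun x y => (x.+1 == y :> nat) || (y.+1 == x :> nat).
Lemma path_adj_sym n : symmetric (@path_adj n).
Proof. by move=> x y; rewrite /path_adj orbC. Qed.
Lemma path_adj_irr n : irreflexive (@path_adj n).
Proof. by move=> x; rewrite /path_adj orbb; elim: (nat_of_ord x) => // m IH. Qed.
Definition Pgraph n := SGraph (@path_adj_sym n) (@path_adj_irr n).

Definition complete_adj l : rel 'I_l := fun x y => x != y.
Lemma complete_adj_sym l : symmetric (@complete_adj l).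
Proof. by move=> x y; rewrite /complete_adj eq_sym. Qed.
Lemma complete_adj_irr l : irreflexive (@complete_adj l).
Proof. by move=> x; rewrite /complete_adj eqxx. Qed.
Definition Kgraph l := SGraph (@complete_adj_sym l) (@complete_adj_irr l).

Definition cbip_adj i j : rel ('I_i + 'I_j)%type := fun x y =>
  match x, y with inl _, inr _ => true | inr _, inl _ => true | _, _ => false end.
Lemma cbip_adj_sym i j : symmetric (@cbip_adj i j).
Proof. by case=> x; case=> y. Qed.
Lemma cbip_adj_irr i j : irreflexive (@cbip_adj i j).
Proof. by case. Qed.
Definition Kbip i j := SGraph (@cbip_adj_sym i j) (@cbip_adj_irr i j).

Definition join_adj (G H : sgraph) : rel (vertex G + vertex H)%type := fun x y =>
  match x, y with
  | inl a, inl b => adj a b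
  | inr a, inr b => adj a b
  | _, _ => true end.
Lemma join_adj_sym G H : symmetric (@join_adj G H).
Proof. by case=> x; case=> y //=; apply: adj_sym. Qed.
Lemma join_adj_irr G H : irreflexive (@join_adj G H).
Proof. by case=> x /=; apply: adj_irr. Qed.
Definition gjoin G H := SGraph (@join_adj_sym G H) (@join_adj_irr G H).

Definition strong_adj (G H : sgraph) : rel (vertex G * vertex H)%type := fun x y =>
  [|| (x.1 == y.1) && adj x.2 y.2, (x.2 == y.2) && adj x.1 y.1
    | adj x.1 y.1 && adj x.2 y.2].
Lemma strong_adj_sym G H : symmetric (@strong_adj G H).
Proof.
move=> x y; rewrite /strong_adj (eq_sym x.1) (eq_sym x.2)
  (adj_sym x.1) (adj_sym x.2) //.
Qed.
Lemma strong_adj_irr G H : irreflexive (@strong_adj G H).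
Proof. by move=> x; rewrite /strong_adj !adj_irr !andbF. Qed.
Definition strong G H := SGraph (@strong_adj_sym G H) (@strong_adj_irr G H).

Definition subgraph_iso (G X : sgraph) : Prop :=
  exists f : vertex G -> vertex X,
    injective f /\ forall u v, adj u v -> adj (f u) (f v).

Definition bipartite (G : sgraph) : Prop :=
  exists c : vertex G -> bool, forall u v, adj u v -> c u != c v.

Definition path_decomposition {G : sgraph} (B : seq {set vertex G}) : Prop :=
  [/\ forall v, exists2 X, X \in B & v \in X,
      forall u v, adj u v -> exists2 X, X \in B & (u \in X) && (v \in X)
    & forall v a b c, a <= b <= c -> c < size B ->
        v \in nth set0 B a -> v \in nth set0 B c -> v \in nth set0 B b].

Definition pathwidth_le (G : sgraph) (w : nat) : Prop :=
  exists B : seq {set vertex G}, path_decomposition B /\ forall X, X \in B -> #|X| <= w.+1.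

Definition connected_set (G : sgraph) (S : {set vertex G}) : Prop :=
  S != set0 /\
  forall x y, x \in S -> y \in S ->
    connect [rel a b | [&& a \in S, b \in S & adj a b]] x y.

Definition small_minor (s : nat) (F H : sgraph) : Prop :=
  exists mu : vertex F -> {set vertex H},
    [/\ forall v, connected_set (mu v),
        forall v, #|mu v| <= s,
        forall v w, v != w -> [disjoint mu v & mu w]
      & forall v w, adj v w ->
          exists x y, [/\ x \in mu v, y \in mu w & adj x y]].

(* Main.v *)
Require Import Defs.
From mathcomp Require Import all_boot zify.
Set Implicit Arguments. Unset Strict Implicit. Unset Printing Implicit Defensive.


Definition Ex (T : eqType) (x : T) (s : seq T) := size (undup [seq y <- s | y != x]).

Lemma Ex_cat (T : eqType) (x : T) s1 s2 : Ex x (s1 ++ s2) <= Ex x s1 + Ex x s2.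
Proof.
rewrite /Ex filter_cat undup_cat size_cat leq_add2r.
by rewrite size_filter count_size.
Qed.

Lemma Ex_cons_x (T : eqType) (x : T) s : Ex x (x :: s) = Ex x s.
Proof. by rewrite /Ex /= eqxx. Qed.

Lemma Ex_notin (T : eqType) (x : T) s : x \notin s -> Ex x s = size (undup s).
Proof.
move=> xs; rewrite /Ex; congr (size (undup _)); apply/all_filterP/allP => y ys.
by apply: contraNneq xs => <-.
Qed.

Lemma undup_Ex (T : eqType) (x : T) s : size (undup (x :: s)) = (Ex x s).+1.
Proof.
rewrite -(count_predC (pred1 x)) count_uniq_mem ?undup_uniq // mem_undup mem_head.
rewrite add1n; congr _.+1; rewrite -size_filter filter_undup -Ex_cons_x.
by [].
Qed.

Section Walk.
Variables (T : eqType) (R : rel T).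
Definition Rs := fun a b : T => (a == b) || R a b.

Lemma Rs_R x z s : Rs x z -> x \notin z :: s -> R x z.
Proof. by rewrite /Rs; case: eqP => [->|//]; rewrite mem_head. Qed.

Lemma seg_lemma (x : T) c s : count_mem x s <= c -> path Rs x s ->
  Ex x s = 0 \/ exists z s1, [/\ R x z, x \notin z :: s1, path Rs z s1,
     subseq (z :: s1) s & Ex x s <= c.+1 * size (undup (z :: s1))].
Proof.
elim: c s => [|c IH] s.
- rewrite leqn0 => /eqP/count_memPn xs.
  case: s xs => [|z s1] xs; first by left.
  move=> pz; case/andP: pz => Rxz ps; right; exists z, s1; split; [exact: Rs_R Rxz xs|done|done|exact: subseq_refl|].
  by rewrite Ex_notin // mul1n.
case: (boolP (x \in s)) => xs; last first.
  move=> _; case: s xs => [|z s1] xs; first by left.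
  move=> pz; case/andP: pz => Rxz ps; right; exists z, s1; split; [exact: Rs_R Rxz xs|done|done|exact: subseq_refl|].
  by rewrite Ex_notin //; apply: leq_pmull.
have [s1 [s2 [-> x1]]] : exists s1 s2, s = s1 ++ x :: s2 /\ x \notin s1.
  set i := index x s; exists (take i s), (drop i.+1 s); split.
    by rewrite -{1}(cat_take_drop i s) (drop_nth x) ?index_mem // nth_index.
  by rewrite in_take // ltnn.
have sub1 : subseq s1 (s1 ++ x :: s2) by apply: prefix_subseq.
have c0 : count_mem x s1 = 0 by apply/count_memPn.
rewrite count_cat /= eqxx c0 add0n add1n ltnS => cnt.
rewrite cat_path /= => /andP [p1 /andP [_ p2]].
have E : Ex x (s1 ++ x :: s2) <= Ex x s1 + Ex x s2.
  by apply: leq_trans (Ex_cat _ _ _) _; rewrite Ex_cons_x.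
have sub2' : subseq s2 (s1 ++ x :: s2).
  apply: subseq_trans (suffix_subseq s1 _); exact: subseq_cons.
have R1 z s1' : path Rs x (z :: s1') -> x \notin z :: s1' -> R x z.
  by case/andP => /Rs_R H _; apply: H.
case: (IH s2 cnt p2) => [E2|[z [s3 [Rxz xn ps sub3 E3]]]].
- case: s1 p1 x1 sub1 E sub2' c0 => [|z s1'] p1 x1 sub1 E sub2' c0.
  + by left; move: E; rewrite E2 /Ex /=; case: (size _).
  + right; exists z, s1'; split; [exact: R1 p1 x1|done|by case/andP: p1|done|].
    change (Ex x ((z :: s1') ++ x :: s2) <= c.+2 * size (undup (z :: s1'))).
    by apply: leq_trans E _; rewrite E2 addn0 (Ex_notin x1); apply: leq_pmull.
- case: s1 p1 x1 sub1 E sub2' c0 => [|z1 s1'] p1 x1 sub1 E sub2' c0.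
  + right; exists z, s3; split; [done|done|done|exact: subseq_trans sub3 sub2'|].
    apply: leq_trans E _; rewrite /Ex /= add0n; apply: leq_trans E3 _.
    by rewrite leq_mul2r leqnSn orbT.
  + rewrite (Ex_notin x1) in E.
    case: (leqP (size (undup (z :: s3))) (size (undup (z1 :: s1')))) => Hle.
    * right; exists z1, s1'; split; [exact: R1 p1 x1|done|by case/andP: p1|done|].
      change (Ex x ((z1 :: s1') ++ x :: s2) <= c.+2 * size (undup (z1 :: s1'))).
      apply: leq_trans E _; move: E3 Hle.
      set a := size (undup (z :: s3)); set b := size (undup (z1 :: s1')).
      move: (Ex x s2) => e; nia.
    * right; exists z, s3; split; [done|done|done|exact: subseq_trans sub3 sub2'|].
      apply: leq_trans E _; move: E3 Hle.
      set a := size (undup (z :: s3)); set b := size (undup (z1 :: s1')).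
      move: (Ex x s2) => e; nia.
Qed.

Lemma walk_path M d : forall x s, (forall y, count_mem y (x :: s) <= M) ->
  path Rs x s -> M.+2 ^ d <= size (undup (x :: s)) ->
  exists q, [/\ uniq (x :: q), size q = d, path R x q & {subset q <= s}].
Proof.
elim: d => [|d IH] x s cnt ps D; first by exists [::].
have cx : count_mem x s <= M by move: (cnt x) => /=; rewrite eqxx add1n; apply: ltnW.
case: (seg_lemma cx ps) => [E0|[z [s1 [Rxz xn ps1 sub E]]]].
  by move: D; rewrite undup_Ex E0 expnS; move: (expn_gt0 M.+2 d); nia.
have D1 : M.+2 ^ d <= size (undup (z :: s1)).
  move: D E; rewrite undup_Ex expnS; move: (M.+2 ^ d) (Ex x s) (size _) => P e a.
  nia.
have cnt1 : forall y, count_mem y (z :: s1) <= M.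
  move=> y; apply: leq_trans (cnt y); apply: leq_trans (leq_count_subseq _ sub) _.
  by rewrite /= leq_addl.
case: (IH z s1 cnt1 ps1 D1) => q [uq sq pq subq].
exists (z :: q); split => //.
- rewrite cons_uniq uq andbT; apply: contra xn; rewrite !inE => /orP [->//|/subq ->].
  by rewrite orbT.
- by rewrite /= sq.
- by rewrite /= Rxz pq.
- move=> y; rewrite inE => /orP [/eqP ->|/subq ys]; apply: (mem_subseq sub).
    by rewrite mem_head.
  by rewrite inE ys orbT.
Qed.

End Walk.


Fixpoint V (N0 C : nat) (rs : seq bool) : finType :=
  match rs with [::] => 'I_N0 | _ :: rs' => option ('I_C * V N0 C rs')%type end.

Fixpoint cls N0 C rs : V N0 C rs -> bool :=
  match rs return V N0 C rs -> bool with
  | [::] => fun k => odd k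
  | b :: rs' => fun v => if v is Some (_, u) then @cls N0 C rs' u else b end.

Fixpoint adjV N0 C rs : rel (V N0 C rs) :=
  match rs return rel (V N0 C rs) with
  | [::] => @path_adj N0
  | b :: rs' => fun x y =>
     match x, y with
     | None, None => false
     | None, Some (_, u) => @cls N0 C rs' u != b
     | Some (_, u), None => @cls N0 C rs' u != b
     | Some (c, u), Some (c', u') => (c == c') && @adjV N0 C rs' u u'
     end
  end.

Lemma adjV_sym N0 C rs : symmetric (@adjV N0 C rs).
Proof.
elim: rs => [|b rs IH] /=; first exact: path_adj_sym.
by case=> [[c u]|]; case=> [[c' u']|] //=; rewrite eq_sym IH.
Qed.

Lemma adjV_irr N0 C rs : irreflexive (@adjV N0 C rs).
Proof.
elim: rs => [|b rs IH] /=; first exact: path_adj_irr.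
by case=> [[c u]|] //=; rewrite IH andbF.
Qed.

Definition Gr N0 C rs := SGraph (@adjV_sym N0 C rs) (@adjV_irr N0 C rs).

Lemma adjV_cls N0 C rs (u v : V N0 C rs) : adjV u v -> cls u != cls v.
Proof.
elim: rs u v => [|b rs IH] /=.
  move=> u v; rewrite /path_adj => /orP [] /eqP <- /=; by case: (odd _).
case=> [[c u]|]; case=> [[c' u']|] //=; first by case/andP => _ /IH.
  by rewrite eq_sym.
Qed.

Lemma adjV_nb N0 C rs (u : V N0 C rs) : 1 < N0 -> 0 < C -> exists v, adjV u v.
Proof.
move=> N2 C0; elim: rs u => [|b rs IH] /=.
  move=> u; case: (ltnP u.+1 N0) => h.
    by exists (Ordinal h); rewrite /path_adj /= eqxx.
  have h' : u.-1 < N0 by case: (nat_of_ord u) (ltn_ord u) => //= k; lia.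
  exists (Ordinal h'); rewrite /path_adj /=; apply/orP; right.
  by case: (nat_of_ord u) h (ltn_ord u) => /= [|k]; lia.
case=> [[c u]|].
  by case: (IH u) => v uv; exists (Some (c, v)); rewrite /= eqxx.
pose c0 : 'I_C := Ordinal C0.
have u0 : V N0 C rs.
  by elim: (rs) => [|b' rs' IH']; [exact: (Ordinal (ltnW N2)) | exact: None].
case: (IH u0) => v uv.
case E: (cls u0 == b).
  by exists (Some (c0, v)); rewrite /=; move/adjV_cls: uv; rewrite (eqP E) eq_sym.
by exists (Some (c0, u0)); rewrite /= E.
Qed.


Fixpoint L N0 C (rs : seq bool) : nat := match rs with [::] => N0.+1 | _ :: rs' => C * L N0 C rs' end.

Fixpoint lo N0 C rs : V N0 C rs -> nat :=
  match rs return V N0 C rs -> nat with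
  | [::] => fun k => k
  | b :: rs' => fun v => if v is Some (c, u) then c * L N0 C rs' + @lo N0 C rs' u else 0 end.

Fixpoint hi N0 C rs : V N0 C rs -> nat :=
  match rs return V N0 C rs -> nat with
  | [::] => fun k => k.+1
  | b :: rs' => fun v => if v is Some (c, u) then c * L N0 C rs' + @hi N0 C rs' u
                         else (C * L N0 C rs').-1 end.

Section PW.
Variables (N0 C : nat) (C0 : 0 < C).

Lemma L_gt0 rs : 0 < L N0 C rs.
Proof. by elim: rs => [|b rs IH] //=; rewrite muln_gt0 C0. Qed.

Lemma lo_hi rs (v : V N0 C rs) : lo v <= hi v < L N0 C rs.
Proof.
elim: rs v => [|b rs IH] /=; first by move=> v; rewrite leqnSn /= ltnS ltn_ord.
move: (L_gt0 rs) => Lp.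
case=> [[c u]|] /=; last by lia.
move: (IH u) (ltn_ord c) => /andP [h1 h2] hc.
rewrite leq_add2l h1 /=.
apply: (leq_trans (n := c * L N0 C rs + L N0 C rs)); first by rewrite ltn_add2l.
by rewrite -mulSnr leq_mul2r hc orbT.
Qed.

Lemma overlap rs (u v : V N0 C rs) : adjV u v ->
  exists p, [/\ p < L N0 C rs, lo u <= p <= hi u & lo v <= p <= hi v].
Proof.
elim: rs u v => [|b rs IH] /=.
  move=> u v; rewrite /path_adj => /orP [] /eqP E.
    by exists v; move: (ltn_ord u) (ltn_ord v); rewrite /=; split; lia.
  by exists u; move: (ltn_ord u) (ltn_ord v); rewrite /=; split; lia.
move: (L_gt0 rs) => Lp.
have key c (w : V N0 C rs) : c < C -> c * L N0 C rs + hi w <= (C * L N0 C rs).-1.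
  move=> hc; move: (lo_hi w) => /andP [_ h].
  have : c.+1 * L N0 C rs <= C * L N0 C rs by rewrite leq_mul2r hc orbT.
  rewrite mulSn; lia.
case=> [[c u]|]; case=> [[c' u']|] //= H.
- case/andP: H => /eqP <- /IH [p [h1 h2 h3]].
  exists (c * L N0 C rs + p); split => //.
    apply: (leq_trans (n := c * L N0 C rs + L N0 C rs)); first by rewrite ltn_add2l.
    by rewrite -mulSnr leq_mul2r ltn_ord orbT.
  by rewrite !leq_add2l.
  by rewrite !leq_add2l.
- exists (c * L N0 C rs + lo u); move: (key c u (ltn_ord c)) (lo_hi u); split; lia.
- exists (c' * L N0 C rs + lo u'); move: (key c' u' (ltn_ord c')) (lo_hi u'); split; lia.
Qed.

Definition bag rs p : {set V N0 C rs} := [set v | lo v <= p <= hi v].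

Lemma bag_card rs p : #|bag rs p| <= (size rs).+2.
Proof.
elim: rs p => [|b rs IH] p /=.
  rewrite -(card_in_imset (f := fun k : 'I_N0 => nat_of_ord k == p)).
    by apply: leq_trans (max_card _) _; rewrite card_bool.
  move=> x y; rewrite !inE /= => hx hy /=.
  case: eqP => [ex|nx]; case: eqP => [ey|ny] // _; apply: val_inj => /=; lia.
pose f (w : V N0 C (b :: rs)) : option (V N0 C rs) := if w is Some (_, u) then Some u else None.
rewrite -(card_in_imset (f := f)).
  apply: (leq_trans (n := #|None |: [set Some u | u in bag rs (p %% L N0 C rs)]|)).
    apply: subset_leq_card; apply/subsetP => x /imsetP [w]; rewrite inE.
    case: w => [[c u]|] /= hw ->; rewrite !inE //.
    apply/orP; right; apply/imsetP; exists u => //; rewrite inE.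
    have hc : p = c * L N0 C rs + (p - c * L N0 C rs) by lia.
    move: (lo_hi u) => /andP [_ h].
    rewrite hc modnMDl modn_small; lia.
  rewrite cardsU1 -(add1n (size rs).+2); apply: leq_add; first by case: (_ \notin _).
  rewrite card_imset; first exact: IH.
  by move=> ? ? [] ->.
move=> x y; rewrite !inE /=.
case: x => [[c u]|]; case: y => [[c' u']|] //= hx hy [] E.
subst u'; congr (Some (_, _)); apply: val_inj => /=.
move: (lo_hi u) => /andP [_ h].
case: (ltngtP c c') => // hcc.
  have : c.+1 * L N0 C rs <= c' * L N0 C rs by rewrite leq_mul2r hcc orbT.
  rewrite mulSn; lia.
have : c'.+1 * L N0 C rs <= c * L N0 C rs by rewrite leq_mul2r hcc orbT.
rewrite mulSn; lia.
Qed.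

Lemma pw rs : pathwidth_le (Gr N0 C rs) (size rs).+1.
Proof.
exists (mkseq (bag rs) (L N0 C rs)); split; last first.
  by move=> X /mapP [p _ ->]; apply: bag_card.
split.
- move=> v; exists (bag rs (lo v)); last by rewrite inE leqnn; case/andP: (lo_hi v).
  apply/mapP; exists (lo v) => //; rewrite mem_iota /= add0n.
  by case/andP: (lo_hi v) => h1 h2; apply: leq_ltn_trans h1 h2.
- move=> u v /overlap [p [h1 h2 h3]]; exists (bag rs p); last by rewrite !inE h2 h3.
  by apply/mapP; exists p => //; rewrite mem_iota.
- move=> v a b c /andP [hab hbc]; rewrite size_mkseq => hc.
  rewrite !nth_mkseq //; try lia.
  rewrite !inE => /andP [h1 _] /andP [_ h2]; apply/andP; split; lia.
Qed.

End PW.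


Definition touch (H : sgraph) (A B : {set vertex H}) :=
  exists x y, [/\ x \in A, y \in B & adj x y].
Definition meets (H : sgraph) (A : {set vertex H}) (P : pred (vertex H)) :=
  exists2 x, x \in A & P x.
Definition okset (H : sgraph) (A : {set vertex H}) (S : pred (vertex H)) :=
  [/\ connected_set A, #|A| <= 2 & {subset A <= S}].

Record model (n : nat) (H : sgraph) (S PA PB : pred (vertex H)) (rs : seq bool)
   (X Y : nat -> {set vertex H}) : Prop := Model {
  mX : forall t, t < n -> [/\ okset (X t) S, meets (X t) PA & meets (X t) PB];
  mY : forall s, s < size rs -> okset (Y s) S /\ meets (Y s) (if nth false rs s then PA else PB);
  dXX : forall t t', t < n -> t' < n -> t != t' -> [disjoint X t & X t'];
  dYY : forall s s', s < size rs -> s' < size rs -> s != s' -> [disjoint Y s & Y s'];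
  dXY : forall t s, t < n -> s < size rs -> [disjoint X t & Y s];
  tXX : forall t, t.+1 < n -> touch (X t) (X t.+1);
  tXY : forall t s, t < n -> s < size rs -> touch (X t) (Y s);
  tYY : forall s s', s < size rs -> s' < size rs -> nth false rs s != nth false rs s' ->
          touch (Y s) (Y s') }.

Lemma count_enumT (T : finType) (P : pred T) : count P (enum T) = #|P|.
Proof. by rewrite cardE -size_filter /enum_mem filter_predT. Qed.

Lemma size_undup_bound (T : eqType) M (s : seq T) :
  (forall y, count_mem y s <= M) -> size s <= M * size (undup s).
Proof.
move: {2}(size s) (leqnn (size s)) => k; elim: k s => [|k IH] [|x t] //= hs cnt.
have E : size (x :: t) = count_mem x (x :: t) + size [seq y <- t | y != x].
  rewrite -(count_predC (pred1 x) (x :: t)) size_filter /=.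
  by rewrite eqxx /= addnA; congr (_ + _); apply: eq_count => y /=; rewrite eq_sym.
have E2 : size (undup (x :: t)) = (size (undup [seq y <- t | y != x])).+1 by apply: undup_Ex.
rewrite /= in E; rewrite E E2 mulnS.
apply: leq_add; first exact: cnt.
apply: IH.
  by rewrite size_filter; apply: leq_trans (count_size _ _) _.
move=> y; apply: leq_trans (cnt y).
apply: leq_trans (leq_addl _ _); apply: leq_count_subseq; exact: filter_subseq.
Qed.

Lemma disjP (T : finType) (A B : {set T}) :
  (forall z, z \in A -> z \in B -> False) -> [disjoint A & B].
Proof.
move=> h; rewrite disjoint_subset; apply/subsetP => z zA; rewrite !inE.
by apply/negP => zB; apply: h zA zB.
Qed.

Lemma conn1 (H : sgraph) (a : vertex H) : connected_set [set a].
Proof.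
split; first by apply/set0Pn; exists a; rewrite inE.
by move=> x y; rewrite !inE => /eqP -> /eqP ->; apply: connect0.
Qed.

Lemma conn2 (H : sgraph) (a b : vertex H) : adj a b -> connected_set [set a; b].
Proof.
move=> ab; split; first by apply/set0Pn; exists a; rewrite !inE eqxx.
have e1 : connect [rel x y | [&& x \in [set a; b], y \in [set a; b] & adj x y]] a b.
  by apply: connect1; rewrite /= !inE !eqxx orbT ab.
have e2 : connect [rel x y | [&& x \in [set a; b], y \in [set a; b] & adj x y]] b a.
  by apply: connect1; rewrite /= !inE !eqxx orbT adj_sym ab.
by move=> x y; rewrite !inE => /orP [] /eqP -> /orP [] /eqP ->; rewrite ?connect0.
Qed.

Lemma touch_sym (H : sgraph) (A B : {set vertex H}) : touch A B -> touch B A.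
Proof. by case=> x [y [xA yB xy]]; exists y, x; split => //; rewrite adj_sym. Qed.

Lemma iota_succ_path m k : path (fun a b => b == a.+1) m (iota m.+1 k).
Proof. by elim: k m => [|k IH] m //=; rewrite eqxx IH. Qed.

Lemma base_case n M N0 (H : sgraph) (phi : 'I_N0 -> vertex H) :
  0 < M -> M * M.+2 ^ (2 * n) <= N0 ->
  (forall u v, path_adj u v -> phi u = phi v \/ adj (phi u) (phi v)) ->
  (forall h, #|[set v | phi v == h]| <= M) ->
  exists X : nat -> {set vertex H}, forall t, t < n ->
   [/\ okset (X t) (fun h => [exists v, phi v == h]),
       meets (X t) (fun h => [exists v : 'I_N0, odd v && (phi v == h)]),
       meets (X t) (fun h => [exists v : 'I_N0, ~~ odd v && (phi v == h)]),
       (forall t', t' < n -> t != t' -> [disjoint X t & X t']) &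
       (t.+1 < n -> touch (X t) (X t.+1))].
Proof.
move=> M0 hN wh fib.
pose R := fun a b : vertex H => (a != b) &&
  [exists k : 'I_N0, exists k' : 'I_N0, [&& path_adj k k', phi k == a & phi k' == b]].
have Radj a b : R a b -> adj a b.
  case/andP => ab /existsP [k /existsP [k' /and3P [kk /eqP ea /eqP eb]]].
  by case: (wh _ _ kk) => [e|]; [rewrite -ea -eb e eqxx in ab | rewrite ea eb].
have Rcls a b : R a b -> exists k k' : 'I_N0, [/\ phi k = a, phi k' = b & odd k != odd k'].
  case/andP => ab /existsP [k /existsP [k' /and3P [kk /eqP ea /eqP eb]]].
  exists k, k'; split => //; move: kk; rewrite /path_adj => /orP [] /eqP <- /=;
  by case: (odd _).
have N0p : 0 < N0 by apply: leq_trans hN; rewrite muln_gt0 M0 expn_gt0.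
have hs : size (enum 'I_N0) = N0 by rewrite size_enum_ord.
have hv := val_enum_ord N0.
case E: (enum 'I_N0) hs hv => [|x0 s0]; first by move=> h; rewrite -h in N0p.
move=> hs hv.
have px : path (relpre val (fun a b => b == a.+1)) x0 s0.
  have hi : iota 0 N0 = 0 :: iota 1 N0.-1 by move: N0p; clear; case: N0.
  rewrite -path_map; rewrite hi /= in hv; case: hv => h1 h2.
  by rewrite (_ : \val x0 = 0) // (_ : [seq \val i | i <- s0] = iota 1 N0.-1) // iota_succ_path.
have pw : path (Rs R) (phi x0) [seq phi i | i <- s0].
  apply: homo_path px => a b /= /eqP hab; rewrite /Rs.
  case: eqP => //= ne; apply/andP; split; first by apply/eqP.
  by apply/existsP; exists a; apply/existsP; exists b; rewrite /path_adj hab eqxx !eqxx.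
have cnt y : count_mem y (phi x0 :: [seq phi i | i <- s0]) <= M.
  have -> : phi x0 :: [seq phi i | i <- s0] = [seq phi i | i <- enum 'I_N0] by rewrite E.
  rewrite count_map count_enumT; apply: leq_trans (fib y).
  by rewrite cardsE.
have D : M.+2 ^ (2 * n) <= size (undup (phi x0 :: [seq phi i | i <- s0])).
  rewrite -(leq_pmul2l M0); apply: leq_trans hN _.
  apply: leq_trans (size_undup_bound cnt).
  have : size (x0 :: s0) = N0 by rewrite -E size_enum_ord.
  by move=> /= h; rewrite size_map h.
case: (walk_path cnt pw D) => q [uq sq pq _].
set p := phi x0 :: q.
have Rp i : i < 2 * n -> R (nth (phi x0) p i) (nth (phi x0) p i.+1).
  by move=> hi; move/pathP: pq; apply; rewrite sq.
have sp : size p = (2 * n).+1 by rewrite /= sq.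
pose X t := [set nth (phi x0) p (2 * t); nth (phi x0) p (2 * t).+1].
exists X => t ht.
have R1 : R (nth (phi x0) p (2 * t)) (nth (phi x0) p (2 * t).+1) by apply: Rp; lia.
case: (Rcls _ _ R1) => k [k' [ek ek' kk]].
split.
- split; [exact: conn2 (Radj _ _ R1) | by rewrite cards2; case: (_ != _) | ].
  move=> z; rewrite !inE => /orP [] /eqP ->; apply/existsP; [exists k; by rewrite ek | exists k'; by rewrite ek'].
- case Ek: (odd k).
    exists (phi k); first by rewrite ek /X !inE eqxx.
    by apply/existsP; exists k; rewrite Ek eqxx.
  exists (phi k'); first by rewrite ek' /X !inE eqxx orbT.
  by apply/existsP; exists k'; rewrite eqxx andbT; move: kk; rewrite Ek; case: (odd k').
- case Ek: (odd k).
    exists (phi k'); first by rewrite ek' /X !inE eqxx orbT.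
    by apply/existsP; exists k'; rewrite eqxx andbT; move: kk; rewrite Ek; case: (odd k').
  exists (phi k); first by rewrite ek /X !inE eqxx.
  by apply/existsP; exists k; rewrite Ek eqxx.
- move=> t' ht' tt'; apply: disjP => z; rewrite /X !inE.
  have nu i j : i < size p -> j < size p -> nth (phi x0) p i = nth (phi x0) p j -> i = j.
    by move=> hi hj e; apply/eqP; rewrite -(nth_uniq (phi x0) hi hj uq) e.
  move=> /orP [] /eqP -> /orP [] /eqP /nu E1; move: tt'; rewrite sp in E1; lia.
- move=> ht1; exists (nth (phi x0) p (2 * t).+1), (nth (phi x0) p (2 * t.+1)).
  split; rewrite ?inE ?eqxx ?orbT //.
  by apply: Radj; have := Rp (2 * t).+1; rewrite mulnS add2n; apply; lia.
Qed.


Lemma okset_mono (H : sgraph) (A : {set vertex H}) (S S' : pred (vertex H)) :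
  (forall h, S h -> S' h) -> okset A S -> okset A S'.
Proof. by move=> hS [h1 h2 h3]; split => // z /h3; apply: hS. Qed.

Lemma meets_mono (H : sgraph) (A : {set vertex H}) (S S' : pred (vertex H)) :
  (forall h, S h -> S' h) -> meets A S -> meets A S'.
Proof. by move=> hS [z h1 h2]; exists z => //; apply: hS. Qed.

Lemma main n M N0 rs (H : sgraph) (phi : V N0 M.+1 rs -> vertex H) :
  0 < M -> M * M.+2 ^ (2 * n) <= N0 ->
  (forall u v, adjV u v -> phi u = phi v \/ adj (phi u) (phi v)) ->
  (forall h, #|[set v | phi v == h]| <= M) ->
  exists X Y, @model n H (fun h => [exists v, phi v == h])
     (fun h => [exists v, cls v && (phi v == h)])
     (fun h => [exists v, ~~ cls v && (phi v == h)]) rs X Y.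
Proof.
move=> M0 hN; elim: rs phi => [|b rs IH] phi wh fib.
  case: (base_case M0 hN wh fib) => X hX.
  exists X, (fun _ => set0); split => //.
  - by move=> t ht; case: (hX t ht).
  - by move=> t t' ht ht'; case: (hX t ht) => _ _ _ h _; apply: h.
  - by move=> t ht; case: (hX t (ltnW ht)) => _ _ _ _; apply.
set c := phi None.
pose F := [set w | phi w == c].
pose I := [set (if w is Some (c', _) then c' else ord0) | w in F].
have [c0 c0I] : exists c0, c0 \notin I.
  have : 0 < #|~: I|.
    have := cardsC I; rewrite card_ord => h.
    have : #|I| <= M by apply: leq_trans (leq_imset_card _ _) (fib c).
    lia.
  by case/card_gt0P => x; rewrite inE => ?; exists x.
pose phi' v := phi (Some (c0, v)).
have hne v : phi' v != c.
  apply: contra c0I => e; apply/imsetP; exists (Some (c0, v)) => //; by rewrite inE.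
have wh' u v : adjV u v -> phi' u = phi' v \/ adj (phi' u) (phi' v).
  by move=> uv; apply: wh; rewrite /= eqxx.
have fib' h : #|[set v | phi' v == h]| <= M.
  apply: leq_trans (fib h).
  rewrite -(card_imset _ (f := fun v => Some (c0, v))); last by move=> x y [].
  by apply: subset_leq_card; apply/subsetP => w /imsetP [v]; rewrite !inE => ? ->.
case: (IH phi' wh' fib') => X [Y md].
set S' := fun h => [exists v, phi' v == h].
set PA' := fun h => [exists v, cls v && (phi' v == h)].
set PB' := fun h => [exists v, ~~ cls v && (phi' v == h)].
set S := fun h => [exists v, phi v == h].
set PA := fun h => [exists v, cls v && (phi v == h)].
set PB := fun h => [exists v, ~~ cls v && (phi v == h)].
have SS h : S' h -> S h by case/existsP => v e; apply/existsP; exists (Some (c0, v)).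
have AA h : PA' h -> PA h by case/existsP => v e; apply/existsP; exists (Some (c0, v)).
have BB h : PB' h -> PB h by case/existsP => v e; apply/existsP; exists (Some (c0, v)).
have cS h : S' h -> h != c by case/existsP => v /eqP <-.
have hadj v : cls v != b -> adj c (phi' v).
  move=> cv; case: (wh None (Some (c0, v))) => //.
  by move=> e; move: (hne v); rewrite /c e eqxx.
have touch_c (A : {set vertex H}) : {subset A <= S'} -> meets A (if b then PB' else PA') -> touch A [set c].
  move=> AS [z zA]; case: ifP => hb /existsP [v /andP [cv /eqP e]].
    exists z, c; split; [done|by rewrite inE|]; rewrite -e adj_sym; apply: hadj.
    by rewrite hb; case: (cls v) cv.
  exists z, c; split; [done|by rewrite inE|]; rewrite -e adj_sym; apply: hadj.
  by rewrite hb; case: (cls v) cv.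
have disj_c (A : {set vertex H}) : {subset A <= S'} -> [disjoint [set c] & A].
  move=> AS; apply: disjP => z; rewrite inE => /eqP -> /AS /cS; by rewrite eqxx.
have XS t : t < n -> {subset X t <= S'} by move=> ht; case: (mX md ht) => [[]].
have YS s : s < size rs -> {subset Y s <= S'} by move=> hs; case: (mY md hs) => [[]].
exists X, (fun s => if s is s'.+1 then Y s' else [set c]); split.
- move=> t ht; case: (mX md ht) => h1 h2 h3; split.
  + exact: okset_mono h1.
  + exact: meets_mono h2.
  + exact: meets_mono h3.
- case=> [|s] /= hs.
    split; first by split; [exact: conn1 | by rewrite cards1 | move=> z; rewrite inE => /eqP ->;
      apply/existsP; exists None].
    exists c; first by rewrite inE.
    by case: ifP => hb; apply/existsP; exists None; rewrite /= hb eqxx.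
  case: (mY md hs) => h1 h2; split; first exact: okset_mono h1.
  by case: (nth false rs s) h2; apply: meets_mono.
- exact: (dXX md).
- case=> [|s] [|s'] //= hs hs' ne.
  + exact: disj_c (YS _ hs').
  + by rewrite disjoint_sym; apply: disj_c (YS _ hs).
  + exact: (dYY md).
- move=> t [|s] ht /= hs; last exact: (dXY md).
  by rewrite disjoint_sym; apply: disj_c (XS _ ht).
- exact: (tXX md).
- move=> t [|s] ht /= hs; last exact: (tXY md).
  apply: touch_c (XS _ ht) _; case: (mX md ht) => _ h2 h3; by case: (b).
- case=> [|s] [|s'] //= hs hs' ne.
  + by rewrite eqxx in ne.
  + apply: touch_sym; apply: touch_c (YS _ hs') _; case: (mY md hs') => _.
    have -> : b = ~~ nth false rs s' by move: ne; case: (nth _ _ _); case: (b).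
    by case: (nth _ _ _).
  + apply: touch_c (YS _ hs) _; case: (mY md hs) => _.
    have -> : b = ~~ nth false rs s by move: ne; case: (nth _ _ _); case: (b).
    by case: (nth _ _ _).
  + exact: (tYY md).
Qed.


Lemma model_minor n i j (H : sgraph) S PA PB (X Y : nat -> {set vertex H}) :
  @model n H S PA PB (nseq i true ++ nseq j false) X Y ->
  small_minor 2 (gjoin (Pgraph n) (Kbip i j)) H.
Proof.
move=> md.
have sz : size (nseq i true ++ nseq j false) = i + j by rewrite size_cat !size_nseq.
have nth1 s : s < i -> nth false (nseq i true ++ nseq j false) s = true.
  by move=> hs; rewrite nth_cat size_nseq hs nth_nseq hs.
have nth2 s : s < j -> nth false (nseq i true ++ nseq j false) (i + s) = false.
  by move=> hs; rewrite nth_cat size_nseq ltnNge leq_addr /= nth_nseq addKn hs.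
pose mu (v : ('I_n + ('I_i + 'I_j))%type) :=
  match v with inl p => X p | inr (inl s) => Y s | inr (inr s) => Y (i + s) end.
exists mu.
have ok v : okset (mu v) S.
  case: v => [p|[s|s]].
  - by case: (mX md (ltn_ord p)).
  - by case: (mY md (_ : (s : nat) < _)) => //; rewrite sz; apply: ltn_addr.
  - by case: (mY md (_ : i + s < _)) => //; rewrite sz ltn_add2l.
have hi (s : 'I_i) : (s : nat) < size (nseq i true ++ nseq j false) by rewrite sz; apply: ltn_addr.
have hj (s : 'I_j) : i + s < size (nseq i true ++ nseq j false) by rewrite sz ltn_add2l.
split.
- by move=> v; case: (ok v).
- by move=> v; case: (ok v).
- case=> [p|[s|s]] [p'|[s'|s']] //= ne.
  + by apply: (dXX md) => //; apply: contra ne => /eqP /val_inj ->.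
  + exact: (dXY md).
  + exact: (dXY md).
  + by rewrite disjoint_sym; apply: (dXY md).
  + by apply: (dYY md) => //; apply: contra ne => /eqP /val_inj ->.
  + by apply: (dYY md) => //; move: (ltn_ord s); rewrite neq_ltn; lia.
  + by rewrite disjoint_sym; apply: (dXY md).
  + by apply: (dYY md) => //; move: (ltn_ord s'); rewrite neq_ltn; lia.
  + apply: (dYY md) => //; apply: contra ne => /eqP E; apply/eqP; congr inr; congr inr.
    by apply: val_inj; move: E => /=; lia.
- case=> [p|[s|s]] [p'|[s'|s']] //= hadj.
  + case/orP: hadj => /eqP E.
      by rewrite -E; apply: (tXX md); rewrite E.
    by apply: touch_sym; rewrite -E; apply: (tXX md); rewrite E.
  + exact: (tXY md).
  + exact: (tXY md).
  + exact: touch_sym (tXY md _ _).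
  + by apply: (tYY md) => //; rewrite nth1 // nth2.
  + exact: touch_sym (tXY md _ _).
  + by apply: (tYY md) => //; rewrite nth2 // nth1.
Qed.


Lemma strong_fst (G1 G2 : sgraph) (x y : vertex (strong G1 G2)) :
  adj x y -> x.1 = y.1 \/ adj x.1 y.1.
Proof.
rewrite /= /strong_adj => /or3P [/andP [/eqP -> _]|/andP [_ ->]|/andP [-> _]]; by auto.
Qed.

Lemma strong_snd (G1 G2 : sgraph) (x y : vertex (strong G1 G2)) :
  adj x y -> x.2 = y.2 \/ adj x.2 y.2.
Proof.
rewrite /= /strong_adj => /or3P [/andP [_ ->]|/andP [/eqP -> _]|/andP [_ ->]]; by auto.
Qed.

Lemma fiber_lemma N0 C rs (H : sgraph) m l
  (f : V N0 C rs -> vertex (strong (strong H (Pgraph m)) (Kgraph l))) :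
  0 < size rs -> 1 < N0 -> 0 < C -> injective f ->
  (forall u v, adjV u v -> adj (f u) (f v)) ->
  forall h, #|[set v | (f v).1.1 == h]| <= 5 * l.
Proof.
case: rs f => [//|b rs'] f _ N2 C0 finj fhom h.
pose psi v := nat_of_ord (f v).1.2.
have d1 u v : adjV u v -> psi u <= psi v + 1 /\ psi v <= psi u + 1.
  move=> /fhom /strong_fst [e|]; first by rewrite /psi e; lia.
  move=> /strong_snd [e|]; first by rewrite /psi e; lia.
  rewrite /= /path_adj /psi => /orP [] /eqP <-; split; rewrite !addn1 //; apply: leqW; apply: leqnSn.
have d2 v : psi v <= psi None + 2 /\ psi None <= psi v + 2.
  case: v => [[c u]|]; last by lia.
  case E: (cls u != b).
    by have := d1 None (Some (c, u)); rewrite /= E => /(_ isT); lia.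
  case: (adjV_nb u N2 C0) => u' uu'.
  have cu' : cls u' != b.
    by move: (adjV_cls uu') E; case: (cls u); case: (cls u'); case: (b).
  have := d1 None (Some (c, u')); rewrite /= cu' => /(_ isT).
  have := d1 (Some (c, u')) (Some (c, u)); rewrite /= eqxx adjV_sym uu' => /(_ isT).
  lia.
pose g v : ('I_5 * 'I_l)%type := (inord (psi v + 2 - psi None), (f v).2).
rewrite -(card_in_imset (f := g)).
  by apply: leq_trans (max_card _) _; rewrite card_prod !card_ord.
move=> v w; rewrite !inE => /eqP hv /eqP hw [] e1 e2.
have h1 : psi v = psi w.
  have := congr1 (@nat_of_ord 5) e1; move: (d2 v) (d2 w) => dv dw.
  by rewrite !inordK; move: dv dw; move: (psi v) (psi w) (psi None) => a1 b1 c1; lia.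
apply: finj; move: hv hw e2 h1; rewrite /psi.
case: (f v) => [[a1 a2] a3]; case: (f w) => [[b1 b2] b3] /= -> -> -> /val_inj -> //.
Qed.

Lemma wh_lemma N0 C rs (H : sgraph) m l
  (f : V N0 C rs -> vertex (strong (strong H (Pgraph m)) (Kgraph l))) :
  (forall u v, adjV u v -> adj (f u) (f v)) ->
  forall u v, adjV u v -> (f u).1.1 = (f v).1.1 \/ adj (f u).1.1 (f v).1.1.
Proof.
move=> fhom u v /fhom /strong_fst [->|/strong_fst]; by auto.
Qed.

Theorem theorem11 (i j l n : nat) :
  1 <= i + j -> 0 < l -> 0 < n ->
  exists G : sgraph,
    [/\ bipartite G, pathwidth_le G (i + j).+1 &
      forall (H : sgraph) (m : nat), 0 < m ->
        subgraph_iso G (strong (strong H (Pgraph m)) (Kgraph l)) ->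
        small_minor 2 (gjoin (Pgraph n) (Kbip i j)) H].
Proof.
move=> ij l0 n0.
pose M := 5 * l.
have M0 : 0 < M by rewrite /M muln_gt0.
pose N0 := M * M.+2 ^ (2 * n).
have N2 : 1 < N0.
  rewrite /N0; have := expn_gt0 M.+2 (2 * n); rewrite /M; nia.
pose rs := nseq i true ++ nseq j false.
have srs : size rs = i + j by rewrite size_cat !size_nseq.
exists (Gr N0 M.+1 rs); split.
- by exists (@cls N0 M.+1 rs) => u v; apply: adjV_cls.
- by have := @pw N0 M.+1 (ltn0Sn M) rs; rewrite srs.
- move=> H m m0 [f [finj fhom]].
  have fib := fiber_lemma (rs := rs) (N0 := N0) (C := M.+1) (H := H) (f := f).
  have fib' : forall h, #|[set v | (f v).1.1 == h]| <= M.
    by apply: fib => //; rewrite srs.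
  case: (main (phi := fun v => (f v).1.1) M0 (leqnn _) (wh_lemma fhom) fib') => X [Y md].
  exact: model_minor md.
Qed.
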